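(* Let $M$ be a topological space and $E:\mathbb{R}\to\mathcal{T}(M)$ a spectral family in the lattice $\mathcal{T}(M)$ of open subsets of $M$, with admissible domain $\mathcal{D}(E)$ and induced function $f_E:\mathcal{D}(E)\to\mathbb{R}$. Then $\mathrm{sp}(E)=\overline{\mathrm{im}\, f_E}$.
   Context: In $\mathcal{T}(M)$, $\bigvee_\alpha U_\alpha=\bigcup_\alpha U_\alpha$ and $\bigwedge_\alpha U_\alpha=\mathrm{int}\bigcap_\alpha U_\alpha$. A spectral family in $\mathcal{T}(M)$ is a map $E:\mathbb{R}\to\mathcal{T}(M)$ with $E_\lambda\subseteq E_\mu$ for $\lambda\le\mu$, $E_\lambda=\bigwedge_{\mu>\lambda}E_\mu$, $\bigwedge_\lambda E_\lambda=\emptyset$, $\bigcup_\lambda E_\lambda=M$. Its admissible domain is $\mathcal{D}(E)=\{x\in M\mid\exists\lambda: x\notin E_\lambda\}$, and the induced function is $f_E(x)=\inf\{\lambda\in\mathbb{R}\mid x\in E_\lambda\}$ for $x\in\mathcal{D}(E)$. The resolvent set $R(E)$ is the set of $\lambda\in\mathbb{R}$ such that $E$ is constant on a neighbourhood of $\lambda$, and $\mathrm{sp}(E)=\mathbb{R}\setminus R(E)$. *)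

(* Defs.v *)
From HB Require Import structures.
From mathcomp Require Import all_boot all_order all_algebra.
From mathcomp Require Import all_classical all_reals all_analysis.
Set Implicit Arguments. Unset Strict Implicit. Unset Printing Implicit Defensive.
Import Order.TTheory GRing.Theory Num.Theory.
Import numFieldNormedType.Exports.
Local Open Scope classical_set_scope.
Local Open Scope ring_scope.

(* The lattice T(M) of open subsets of a topological space M:
   join = union, meet = interior of the intersection. *)

Definition spectral_family (R : realType) (M : topologicalType)
  (E : R -> set M) : Prop :=
  [/\ (forall l, open (E l)),
      (forall l m, l <= m -> E l `<=` E m),
      (forall l, E l = interior (\bigcap_(m in [set m | l < m]) E m)),
      interior (\bigcap_(l in [set: R]) E l) = set0 &
      \bigcup_(l in [set: R]) E l = [set: M] ].

Definition adm_domain (R : realType) (M : topologicalType) (E : R -> set M)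
  : set M := [set x | exists l, ~ E l x].

Definition induced_fun (R : realType) (M : topologicalType) (E : R -> set M)
  (x : M) : R := inf [set l | E l x].

Definition resolvent (R : realType) (M : topologicalType) (E : R -> set M)
  : set R := [set l : R | \forall m \near l, E m = E l].

Definition spectrum (R : realType) (M : topologicalType) (E : R -> set M)
  : set R := ~` resolvent E.

(* Main.v *)
Require Import Defs.
From mathcomp Require Import all_boot all_order all_algebra.
From mathcomp Require Import all_classical all_reals all_analysis.
From mathcomp Require Import lra.
Import numFieldNormedType.Exports.
Import Order.TTheory GRing.Theory Num.Theory.
Local Open Scope classical_set_scope.
Local Open Scope ring_scope.

Lemma ballRP (R : realType) (x y e : R) : ball x e y <-> x - e < y /\ y < x + e.
Proof.
rewrite ball_itv /= in_itv /=; split; first by case/andP.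
by case=> -> ->.
Qed.

Theorem proposition2p30 (R : realType) (M : topologicalType) (E : R -> set M) :
  spectral_family E ->
  spectrum E = closure (induced_fun E @` adm_domain E).
Proof.
case=> _ mono _ _ cov.
have lbD x : adm_domain E x -> has_lbound [set l | E l x].
  case=> l0 nl0; exists l0 => l Elx; rewrite /= leNgt; apply/negP => ll0.
  by apply: nl0; apply: (mono l l0 (ltW ll0)).
have neD x : [set l | E l x] !=set0.
  have : (\bigcup_(l in [set: R]) E l) x by rewrite cov.
  by case=> l _ Elx; exists l.
have above x m : induced_fun E x < m -> E m x.
  move=> /(inf_lt (neD x))[l Elx lm]; exact: (mono l m (ltW lm)).
have below x l : adm_domain E x -> E l x -> induced_fun E x <= l.
  by move=> Dx Elx; apply: (ge_inf (lbD x Dx)).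
apply/seteqP; split => lam.
- move=> nres B /nbhs_ballP[e /= e0 eB].
  apply: contra_notP nres => hne.
  apply/nbhs_ballP; exists e => // m /ballRP [h1 h2].
  have key : forall a b, lam - e < a -> a <= b -> b < lam + e -> E b = E a.
    move=> a b ha hab hb; apply/seteqP; split; last exact: mono.
    move=> x Ebx.
    case: (pselect (adm_domain E x)) => Dx; last first.
      by apply: contra_notP Dx => nEa; exists a.
    have fb := below x b Dx Ebx.
    have fout : ~ ball lam e (induced_fun E x).
      move=> bf; apply: hne; exists (induced_fun E x); split; first by exists x.
      exact: eB.
    have fle : induced_fun E x <= lam - e.
      rewrite leNgt; apply/negP => lt1; apply: fout; apply/ballRP; split => //.
      by apply: (le_lt_trans fb hb).
    by apply: above; apply: (le_lt_trans fle).
  have l1 : lam - e < lam by lra.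
  have l2 : lam < lam + e by lra.
  case: (leP lam m) => hm.
  + by rewrite (key lam m).
  + by rewrite (key m lam) // ltW.
- move=> cl res.
  move/nbhs_ballP: res => [e /= e0 eq].
  have [_ [[x Dx <-] /ballRP [h1 h2]]] := cl _ (@nbhsx_ballx _ _ lam e e0).
  set mu := induced_fun E x in h1 h2.
  have Em : E ((mu + (lam + e)) / 2) x by apply: above; rewrite -/mu; lra.
  have bm : ball lam e ((mu + (lam + e)) / 2) by apply/ballRP; lra.
  have bp : ball lam e ((lam - e + mu) / 2) by apply/ballRP; lra.
  rewrite (eq _ bm) -(eq _ bp) in Em.
  have := below x _ Dx Em; rewrite -/mu; lra.
Qed.
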